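(* Let $\mathbb{K}$ be a field and $f=a_0(x)+a_1(x)y+\cdots+a_n(x)y^n\in\mathbb{K}[x,y]$ with $n\geq 2$, $a_0,\ldots,a_n\in\mathbb{K}[x]$, $a_0a_n\neq 0$, such that $f$ has no nonconstant factor in $\mathbb{K}[x]$ and $\deg a_n>\max\{\deg a_0,\ldots,\deg a_{n-1}\}$. If $a_n$ is irreducible in $\mathbb{K}[x]$, or if $a_0$ is irreducible in $\mathbb{K}[x]$ and $\deg a_0\geq\deg a_n-\deg q$, where $q\in\mathbb{K}[x]$ is an irreducible factor of $a_n$ of smallest degree, then $f$ is irreducible over $\mathbb{K}[x]$.
   Context: $f$ is regarded as a polynomial in $y$ with coefficients in $\mathbb{K}[x]$; irreducibility over $\mathbb{K}[x]$ means irreducibility in $\mathbb{K}[x][y]$. *)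

(* Defs.v *)
From HB Require Import structures.
From mathcomp Require Import all_boot all_order all_algebra.
Set Implicit Arguments. Unset Strict Implicit. Unset Printing Implicit Defensive.
Import GRing.Theory.
Local Open Scope ring_scope.

(* Genuine divisibility in a commutative ring (mathcomp's %| on {poly R} for
   R a non-field is pseudo-division based, so we avoid it for K[x][y]). *)
Definition rdvd (R : comNzRingType) (a b : R) : Prop := exists c, b = a * c.

Definition irreducible_elt (R : idomainType) (f : R) : Prop :=
  f != 0 /\ ~~ (f \is a GRing.unit) /\
  forall g h : R, f = g * h -> (g \is a GRing.unit) \/ (h \is a GRing.unit).

(* Main.v *)
Require Import Defs.
From mathcomp Require Import all_boot all_order all_algebra.
From mathcomp Require Import zify.
From Stdlib Require Import Classical.
Set Implicit Arguments. Unset Strict Implicit. Unset Printing Implicit Defensive.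
Import GRing.Theory.
Local Open Scope ring_scope.

Lemma monomial_factor (K : fieldType) (P Q : {poly K}) (c : K) n :
  c != 0 -> P * Q = c *: 'X^n -> P = lead_coef P *: 'X^((size P).-1).
Proof.
move=> c0 PQ.
have : P %| ('X - 0%:P) ^+ n by rewrite polyC0 subr0 -(dvdpZr _ _ c0) -PQ dvdp_mulIl.
case/dvdp_exp_XsubCP => k _; rewrite polyC0 subr0.
case/eqpP => [[c1 c2]] /= /andP[c10 c20] E.
have -> : P = (c2 / c1) *: 'X^k.
  by rewrite mulrC -scalerA -E scalerA mulVf // scale1r.
by rewrite lead_coefZ lead_coefXn mulr1 size_scale ?size_polyXn ?mulf_neq0 ?invr_eq0.
Qed.

Lemma key (K : fieldType) (f g h : {poly {poly K}}) :
  g != 0 -> h != 0 -> f = g * h ->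
  (forall i : nat, (i < (size f).-1)%N -> (size (f`_i)%R < size (lead_coef f))%N) ->
  forall j, (j < (size g).-1)%N -> (size (g`_j)%R < size (lead_coef g))%N.
Proof.
move=> g0 h0 fgh hyp.
have f0 : f != 0 by rewrite fgh mulf_neq0.
have coefL (u : {poly {poly K}}) j : (lead_coef (swapXY u))`_j = u`_j`_(sizeY u).-1.
  by rewrite lead_coefE -sizeYE coef_swapXY.
have sYf : sizeY f = size (lead_coef f).
  apply/eqP; rewrite eqn_leq max_size_lead_coefXY andbT.
  apply/bigmax_leqP => [[i /= ltif]] _.
  case: (ltnP i (size f).-1) => [/hyp/ltnW //|le].

  have -> : i = (size f).-1 by apply/eqP; rewrite eqn_leq le andbT -ltnS (leq_trans ltif) // leqSpred.
  by rewrite lead_coefE.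
have lcf0 : lead_coef f != 0 by rewrite lead_coef_eq0.
have Lfe : lead_coef (swapXY f) = lead_coef (lead_coef f) *: 'X^((size f).-1).
  apply/polyP => j; rewrite coefL coefZ coefXn sYf.
  case: (ltngtP j (size f).-1) => [lt|gt|->]; rewrite ?mulr0 ?mulr1.
  - by apply: nth_default; rewrite -ltnS (leq_trans (hyp _ lt)) // leqSpred.
  - by rewrite (nth_default 0 (_ : size f <= j)%N) ?coef0 //; lia.
  - by rewrite lead_coefE.
have LM : lead_coef (swapXY f) = lead_coef (swapXY g) * lead_coef (swapXY h).
  by rewrite fgh rmorphM lead_coefM.
have c0 : lead_coef (lead_coef f) != 0 by rewrite lead_coef_eq0.
have Lg0 : lead_coef (swapXY g) != 0 by rewrite lead_coef_eq0 swapXY_eq0.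
have Lh0 : lead_coef (swapXY h) != 0 by rewrite lead_coef_eq0 swapXY_eq0.
have mono := monomial_factor c0 (etrans (esym LM) Lfe).
have sL (u : {poly {poly K}}) : (size (lead_coef (swapXY u)) <= size u)%N.
  apply/leq_sizeP => j le; by rewrite coefL (nth_default _ le) coef0.
have sLf : size (lead_coef (swapXY f)) = size f.
  rewrite Lfe size_scale // size_polyXn; have : size f != 0%N by rewrite size_poly_eq0. lia.
have sM := size_mul Lg0 Lh0.
have sM2 := size_mul g0 h0.
have := sL g; have := sL h.
rewrite -LM sLf fgh sM2 in sM.
move=> leh leg.
have p1 : (0 < size (lead_coef (swapXY g)))%N by rewrite size_poly_gt0.
have p2 : (0 < size (lead_coef (swapXY h)))%N by rewrite size_poly_gt0.
have sLg : size (lead_coef (swapXY g)) = size g.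
  move: sM leh leg p1 p2; move: (size (lead_coef (swapXY g))) (size (lead_coef (swapXY h))) (size g) (size h) => a b c d; lia.
move=> j ltj.
have gj0 : g`_j`_(sizeY g).-1 = 0.
  by rewrite -coefL mono coefZ coefXn sLg (negbTE (_ : j != (size g).-1)) ?mulr0 //; lia.
have gl0 : (lead_coef g)`_(sizeY g).-1 != 0.
  by rewrite lead_coefE -coefL mono coefZ coefXn sLg eqxx mulr1 lead_coef_eq0.
have pg : ((sizeY g).-1 < size (lead_coef g))%N.
  by rewrite ltnNge; apply: contra gl0 => /leq_sizeP ->.
have mg := max_size_lead_coefXY g.
have mj := max_size_coefXY g j.
have : (size (g`_j)%R <= (sizeY g).-1)%N.
  apply/leq_sizeP => k le; have [->//|ne] := eqVneq k (sizeY g).-1.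
  apply: nth_default.
  move: pg mg mj le ne; move: (sizeY g) (size (lead_coef g)) (size (g`_j)%R) => a b c.
  move=> ? ? ? ? /eqP ?; lia.
move: pg mg; move: (sizeY g) (size (lead_coef g)) (size (g`_j)%R) => a b c.
lia.
Qed.

Lemma exists_irr (K : fieldType) (p : {poly K}) :
  (1 < size p)%N -> exists r : {poly K}, irreducible_poly r /\ r %| p.
Proof.
elim: {p}(size p) {-2}p (leqnn (size p)) => [|n IH] p le gt.
  by move: le gt; case: (size p).
destruct (classic (irreducible_poly p)) as [irr|nirr].
  by exists p; split; rewrite ?dvdpp.
have [q [sq dq nq]] : exists q : {poly K}, [/\ size q != 1%N, q %| p & ~~ (q %= p)].
  apply: NNPP => H; apply: nirr; split => // q sq dq.
  apply/negPn/negP => nq; apply: H; by exists q.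
have p0 : p != 0 by rewrite -size_poly_gt0 (ltn_trans _ gt).
have q0 : q != 0 by apply: contraNneq p0 => q0; move: dq; rewrite q0 dvd0p.
have ltq : (size q < size p)%N.
  by rewrite ltn_neqAle (dvdp_leq p0 dq) andbT dvdp_size_eqp.
have gq : (1 < size q)%N.
  by move: sq q0; rewrite -size_poly_eq0; case: (size q) => [|[|]].
have sqn : (size q <= n)%N by rewrite -ltnS (leq_trans ltq le).
have [r [ir dr]] := IH q sqn gq.
by exists r; split => //; apply: dvdp_trans dr dq.
Qed.

Lemma arith1 (A B F0 Q Lf : nat) :
  (2 <= Q)%N -> (Q <= A)%N -> (1 <= F0)%N -> (F0 < B)%N ->
  Lf = (A + B).-1 -> (Lf.-1 <= F0.-1 + Q.-1)%N -> False.
Proof. lia. Qed.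

Lemma big2 (K : fieldType) (f u v : {poly {poly K}}) :
  (forall d : {poly K}, rdvd (d%:P) f -> (size d <= 1)%N) ->
  f = u * v -> u != 0 -> ~~ (u \is a GRing.unit) -> (2 <= size u)%N.
Proof.
move=> nofac fuv u0 nu; rewrite leqNgt; apply/negP => s1.
have E := size1_polyC s1.
have c0 : u`_0 != 0 by apply: contraNneq u0 => c0; rewrite E c0.
have sc : (size (u`_0)%R <= 1)%N by apply: nofac; exists v; rewrite fuv -E.
have sc1 : size (u`_0)%R = 1%N.
  by move: sc c0; rewrite -size_poly_eq0; case: (size _) => [|[|]].
move/negP: nu; apply; rewrite E poly_unitE size_polyC c0 coefC /=.
have lc : lead_coef (u`_0) = (u`_0)`_0 by rewrite lead_coefE sc1.
by rewrite poly_unitE sc1 /= unitfE -lc lead_coef_eq0.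
Qed.

Theorem corollary4 (K : fieldType) (f : {poly {poly K}}) :
  (3 <= size f)%N ->
  f`_0 * lead_coef f != 0 ->
  (forall d : {poly K}, rdvd (d%:P) f -> (size d <= 1)%N) ->
  (forall i : nat, (i < (size f).-1)%N -> (size (f`_i)%R < size (lead_coef f))%N) ->
  (irreducible_poly (lead_coef f) \/
   (irreducible_poly f`_0 /\
    exists q : {poly K},
      [/\ irreducible_poly q, q %| lead_coef f,
          (forall r : {poly K}, irreducible_poly r -> r %| lead_coef f ->
             (size q <= size r)%N)
        & ((size (lead_coef f)).-1 <= (size (f`_0)%R).-1 + (size q).-1)%N])) ->
  irreducible_elt f.
Proof.
move=> s3 a0n nofac degc hyp.
have a00 : f`_0 != 0 by apply: contraNneq a0n => ->; rewrite mul0r.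
have lcf0 : lead_coef f != 0 by apply: contraNneq a0n => ->; rewrite mulr0.
have f0 : f != 0 by rewrite -lead_coef_eq0.
split => //; split.
  by rewrite poly_unitE negb_and; apply/orP; left; apply/eqP => s1; rewrite s1 in s3.
move=> g h fgh.
have [gu|gnu] := boolP (g \is a GRing.unit); first by left.
right; apply/negPn/negP => hnu; exfalso.
have g0 : g != 0 by apply: contraNneq f0 => g0; rewrite fgh g0 mul0r.
have h0 : h != 0 by apply: contraNneq f0 => h0; rewrite fgh h0 mulr0.
have fhg : f = h * g by rewrite mulrC.
have sg := big2 nofac fgh g0 gnu.
have sh := big2 nofac fhg h0 hnu.
have kg := key g0 h0 fgh degc.
have kh := key h0 g0 fhg degc.
have C1 : forall u v : {poly {poly K}}, f = u * v -> u != 0 -> v != 0 ->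
    (2 <= size u)%N ->
    (forall j, (j < (size u).-1)%N -> (size (u`_j)%R < size (lead_coef u))%N) ->
    size (lead_coef u) = 1%N -> False.
  move=> u v fuv u0 v0 su ku slu.
  have su1 : (0 < (size u).-1)%N by move: su; case: (size u) => [|[|]].
  have u00 : u`_0 = 0.
    by apply/eqP; rewrite -size_poly_eq0 -leqn0 -ltnS -slu; apply: ku.
  by move: a00; rewrite fuv coef0M u00 mul0r eqxx.
have C2 : forall u v : {poly {poly K}}, f = u * v -> u != 0 -> v != 0 ->
    (2 <= size u)%N -> (2 <= size v)%N ->
    (forall j, (j < (size u).-1)%N -> (size (u`_j)%R < size (lead_coef u))%N) ->
    (forall j, (j < (size v).-1)%N -> (size (v`_j)%R < size (lead_coef v))%N) ->
    size (u`_0)%R = 1%N ->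
    (exists q : {poly K},
      [/\ irreducible_poly q, q %| lead_coef f,
          (forall r : {poly K}, irreducible_poly r -> r %| lead_coef f ->
             (size q <= size r)%N)
        & ((size (lead_coef f)).-1 <= (size (f`_0)%R).-1 + (size q).-1)%N]) -> False.
  move=> u v fuv u0 v0 su sv ku kv su0 [q [iq dq mq bnd]].
  have su1 : (0 < (size u).-1)%N by move: su; case: (size u) => [|[|]].
  have sv1 : (0 < (size v).-1)%N by move: sv; case: (size v) => [|[|]].
  have lcu1 : (1 < size (lead_coef u))%N by rewrite -su0; apply: ku.
  have [r [ir dr]] := exists_irr lcu1.
  have rf : r %| lead_coef f by rewrite fuv lead_coefM dvdp_mulr.
  have qr := mq r ir rf.
  have lcu0 : lead_coef u != 0 by rewrite lead_coef_eq0.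
  have lcv0 : lead_coef v != 0 by rewrite lead_coef_eq0.
  have rA := dvdp_leq lcu0 dr.
  have q2 : (1 < size q)%N := iq.1.
  have kv0 := kv 0%N sv1.
  have u0n : u`_0 != 0 by rewrite -size_poly_eq0 su0.
  have v0n : v`_0 != 0 by apply: contraNneq a00 => e; rewrite fuv coef0M e mulr0.
  have sf0 : size (f`_0)%R = size (v`_0)%R.
    by rewrite fuv coef0M size_mul // su0.
  have F1 : (1 <= size (v`_0)%R)%N by rewrite size_poly_gt0.
  have sLf : size (lead_coef f) = (size (lead_coef u) + size (lead_coef v)).-1.
    by rewrite fuv lead_coefM size_mul.
  rewrite sf0 in bnd.
  apply: (arith1 _ _ F1 kv0 sLf bnd) => //.
  exact: leq_trans qr rA.
case: hyp => [irr | [irr0 qex]].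
  have dv : lead_coef g %| lead_coef f by rewrite fgh lead_coefM dvdp_mulr.
  have [s1|ns1] := eqVneq (size (lead_coef g)) 1%N.
    exact: (C1 g h fgh g0 h0 sg kg s1).
  have E := eqp_size (apply_irredp irr ns1 dv).
  apply: (C1 h g fhg h0 g0 sh kh).
  have lcg0 : (0 < size (lead_coef g))%N by rewrite size_poly_gt0 lead_coef_eq0.
  have lch0 : (0 < size (lead_coef h))%N by rewrite size_poly_gt0 lead_coef_eq0.
  have sLf : size (lead_coef f) = (size (lead_coef g) + size (lead_coef h)).-1.
    by rewrite fgh lead_coefM size_mul // lead_coef_eq0.
  move: E sLf lcg0 lch0.
  move: (size (lead_coef g)) (size (lead_coef h)) (size (lead_coef f)) => a b c.
  lia.
have dv : g`_0 %| f`_0 by rewrite fgh coef0M dvdp_mulr.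
have [s1|ns1] := eqVneq (size (g`_0)%R) 1%N.
  exact: (C2 g h fgh g0 h0 sg sh kg kh s1 qex).
have E := eqp_size (apply_irredp irr0 ns1 dv).
apply: (C2 h g fhg h0 g0 sh sg kh kg _ qex).
have g00 : g`_0 != 0 by apply: contraNneq a00 => e; rewrite fgh coef0M e mul0r.
have h00 : h`_0 != 0 by apply: contraNneq a00 => e; rewrite fgh coef0M e mulr0.
have lcg0 : (0 < size (g`_0)%R)%N by rewrite size_poly_gt0.
have lch0 : (0 < size (h`_0)%R)%N by rewrite size_poly_gt0.
have sLf : size (f`_0)%R = (size (g`_0)%R + size (h`_0)%R).-1.
  by rewrite fgh coef0M size_mul.
move: E sLf lcg0 lch0.
move: (size (g`_0)%R) (size (h`_0)%R) (size (f`_0)%R) => a b c.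
lia.
Qed.
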